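(* Let $p\in(1/2,1)$, $V\in\{G,B\}$ and $r\ge2$ an integer, and let $p_f$ denote the value of $p_f$ at $\epsilon=\epsilon_r$. Then $$\lim_{\epsilon\to\epsilon_r^+}\mathbb{P}_{Y\text{-cas}}(\epsilon)=p_f^{r+1}\frac{1+(1-p_f)p_f^{r}}{1-r(1-p_f)p_f^{r}},\qquad \lim_{\epsilon\to\epsilon_r^-}\mathbb{P}_{Y\text{-cas}}(\epsilon)=\frac{p_f^{r}}{1-r(1-p_f)p_f^{r}},$$ so that as $\epsilon$ increases through $\epsilon_r$ the probability of a $Y$ cascade decreases, with relative drop $$\delta_r=\frac{\mathbb{P}_{Y\text{-cas}}(\epsilon_r^-)-\mathbb{P}_{Y\text{-cas}}(\epsilon_r^+)}{\mathbb{P}_{Y\text{-cas}}(\epsilon_r^-)}=(1-p_f)(1-p_f^{r+1}).$$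
   Context: Observational learning model: an item has true value $V\in\{G,B\}$; agents arrive sequentially, each receives a private binary signal equal to the ''correct'' signal with probability $p\in(1/2,1)$, and each agent is independently fake with probability $\epsilon\in[0,1)$ (a fake agent's recorded action is always $Y$ = buy). Define $a=p+(1-p)\epsilon$, $b=p(1-\epsilon)$, $\alpha=p/(1-p)$ and $\eta=\eta(\epsilon)=\log\big(a/(1-b)\big)/\log\alpha\in(0,1]$. Given $V$, let $p_f=a$ if $V=G$ and $p_f=1-b$ if $V=B$. Before any cascade, the agents' sufficient statistic $h$ evolves as the following random walk: $h_0=0$ and, independently at each step, $h$ increases by $\eta$ with probability $p_f$ (an observed $Y$) or decreases by $1$ with probability $1-p_f$ (an observed $N$); the walk is stopped the first time it leaves $[-1,1]$. Leaving above $1$ is a $Y$ cascade. $\mathbb{P}_{Y\text{-cas}}(\epsilon)$ denotes the probability (given $V$) that the walk leaves $[-1,1]$ above $1$. The thresholds are $\epsilon_r=\dfrac{\alpha-\alpha^{1/r}}{\alpha^{1/r+1}-1}$, $r=1,2,\ldots$. *)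

(* Defs.v *)
From Stdlib Require Import Reals Lra.
From Coquelicot Require Import Coquelicot.
Open Scope R_scope.

(* true value of the item *)
Inductive value := G | B.

Definition par_a (p eps : R) : R := p + (1 - p) * eps.
Definition par_b (p eps : R) : R := p * (1 - eps).
Definition alpha (p : R) : R := p / (1 - p).
Definition eta (p eps : R) : R :=
  ln (par_a p eps / (1 - par_b p eps)) / ln (alpha p).

(* probability of an observed Y, given V *)
Definition pf (p eps : R) (V : value) : R :=
  match V with G => par_a p eps | B => 1 - par_b p eps end.

(* absY n q d h : probability that the walk started at h (steps +d w.p. q,
   -1 w.p. 1-q, stopped when leaving [-1,1]) has left [-1,1] above 1
   within n steps. *)
Fixpoint absY (n : nat) (q d h : R) : R :=
  match n with
  | O => if Rlt_dec 1 h then 1 else 0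
  | S m => if Rlt_dec 1 h then 1
           else if Rlt_dec h (-1) then 0
           else q * absY m q d (h + d) + (1 - q) * absY m q d (h - 1)
  end.

(* P_{Y-cas}(eps): probability (given V) that the walk from h_0 = 0
   ever leaves [-1,1] above 1 (limit of the nondecreasing bounded sequence). *)
Definition PYcas (p eps : R) (V : value) : R :=
  real (Lim_seq (fun n => absY n (pf p eps V) (eta p eps) 0)).

Definition eps_r (p : R) (r : nat) : R :=
  (alpha p - Rpower (alpha p) (1 / INR r))
  / (Rpower (alpha p) (1 / INR r + 1) - 1).

(* Main.v *)
Require Import Defs.
From Stdlib Require Import Reals Lra Lia ZArith.
From Coquelicot Require Import Coquelicot.
Open Scope R_scope.


Fixpoint surv (n : nat) (q d h : R) : R :=
  match n with
  | O => if Rlt_dec 1 h then 0 else if Rlt_dec h (-1) then 0 else 1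
  | S m => if Rlt_dec 1 h then 0
           else if Rlt_dec h (-1) then 0
           else q * surv m q d (h + d) + (1 - q) * surv m q d (h - 1)
  end.

Section Walk.
Variables (q d : R).
Hypothesis Hq : 0 <= q <= 1.

Lemma absY_bnd : forall n h, 0 <= absY n q d h <= 1.
Proof.
  induction n; intros h; simpl.
  - destruct (Rlt_dec 1 h); lra.
  - destruct (Rlt_dec 1 h); [lra|]. destruct (Rlt_dec h (-1)); [lra|].
    pose proof (IHn (h + d)); pose proof (IHn (h - 1)). nra.
Qed.

Lemma surv_bnd : forall n h, 0 <= surv n q d h <= 1.
Proof.
  induction n; intros h; simpl.
  - destruct (Rlt_dec 1 h); [lra|]. destruct (Rlt_dec h (-1)); lra.
  - destruct (Rlt_dec 1 h); [lra|]. destruct (Rlt_dec h (-1)); [lra|].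
    pose proof (IHn (h + d)); pose proof (IHn (h - 1)). nra.
Qed.

Lemma absY_below : forall n h, h < -1 -> absY n q d h = 0.
Proof.
  intros n h H; destruct n; simpl; destruct (Rlt_dec 1 h); try lra.
  destruct (Rlt_dec h (-1)); lra.
Qed.

Lemma surv_abs : forall n h, (1 < h \/ h < -1) -> surv n q d h = 0.
Proof.
  intros n h H; destruct n; simpl; destruct (Rlt_dec 1 h); try lra;
  destruct (Rlt_dec h (-1)); lra.
Qed.

Lemma absY_mono1 : forall n h, absY n q d h <= absY (S n) q d h.
Proof.
  induction n; intros h.
  - simpl. destruct (Rlt_dec 1 h); [lra|]. destruct (Rlt_dec h (-1)); [lra|].
    pose proof (absY_bnd 0 (h + d)); pose proof (absY_bnd 0 (h - 1)). simpl in *. nra.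
  - change (absY (S n) q d h <= absY (S (S n)) q d h).
    simpl. destruct (Rlt_dec 1 h); [lra|]. destruct (Rlt_dec h (-1)); [lra|].
    pose proof (IHn (h + d)); pose proof (IHn (h - 1)). simpl in *. nra.
Qed.

Lemma absY_mono : forall m n h, absY n q d h <= absY (m + n) q d h.
Proof.
  induction m; intros n h; simpl; [lra|].
  eapply Rle_trans; [apply IHm|]. apply absY_mono1.
Qed.

Lemma absY_tail : forall n m h, absY (n + m) q d h <= absY n q d h + surv n q d h.
Proof.
  induction n; intros m h.
  - simpl. pose proof (absY_bnd m h).
    destruct (Rlt_dec 1 h).
    + destruct m; simpl; destruct (Rlt_dec 1 h); lra.
    + destruct (Rlt_dec h (-1)).
      * rewrite absY_below; lra.
      * lra.
  - simpl. destruct (Rlt_dec 1 h); [lra|]. destruct (Rlt_dec h (-1)); [lra|].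
    pose proof (IHn m (h + d)); pose proof (IHn m (h - 1)). nra.
Qed.

Lemma surv_markov : forall a B, 0 <= B -> (forall h, surv a q d h <= B) ->
  forall m h, surv (m + a) q d h <= surv m q d h * B.
Proof.
  intros a B HB Ha. induction m; intros h.
  - simpl. destruct (Rlt_dec 1 h).
    + rewrite surv_abs; lra.
    + destruct (Rlt_dec h (-1)).
      * rewrite surv_abs; lra.
      * specialize (Ha h); lra.
  - simpl. destruct (Rlt_dec 1 h); [lra|]. destruct (Rlt_dec h (-1)); [lra|].
    pose proof (IHm (h + d)); pose proof (IHm (h - 1)). nra.
Qed.

Lemma surv_step_le : forall n h, surv (S n) q d h <= q + (1 - q) * surv n q d (h - 1).
Proof.
  intros n h. simpl. pose proof (surv_bnd n (h-1)).
  destruct (Rlt_dec 1 h); [nra|]. destruct (Rlt_dec h (-1)); [nra|].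
  pose proof (surv_bnd n (h + d)). nra.
Qed.

Lemma surv3 : forall h, surv 3 q d h <= 1 - (1 - q) ^ 3.
Proof.
  intros h. destruct (Rlt_dec 1 h).
  - rewrite surv_abs by lra. assert (0 <= (1-q)^3 <= 1).
    { split. apply pow_le; lra. rewrite <- (pow1 3). apply pow_incr; lra. }
    lra.
  - pose proof (surv_step_le 2 h). pose proof (surv_step_le 1 (h - 1)).
    pose proof (surv_step_le 0 (h - 1 - 1)).
    rewrite (surv_abs 0 (h - 1 - 1 - 1)) in H1 by lra.
    assert (0 <= 1 - q) by lra.
    assert (surv 2 q d (h-1) <= q + (1-q) * q) by nra.
    assert (surv 3 q d h <= q + (1-q) * (q + (1-q) * q)) by nra.
    assert (1 - (1-q)^3 = q + (1-q)*(q+(1-q)*q)) by ring. lra.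
Qed.

Lemma surv_geo : forall K h, surv (3 * K) q d h <= (1 - (1 - q) ^ 3) ^ K.
Proof.
  assert (Hr : 0 <= 1 - (1 - q) ^ 3).
  { assert ((1-q)^3 <= 1). rewrite <- (pow1 3). apply pow_incr; lra. lra. }
  induction K; intros h.
  - change (3 * 0)%nat with O. simpl pow. apply surv_bnd.
  - replace (3 * S K)%nat with (3 + 3 * K)%nat by lia.
    eapply Rle_trans. apply (surv_markov (3*K) ((1-(1-q)^3)^K)). apply pow_le; auto. apply IHK.
    replace ((1-(1-q)^3)^(S K)) with ((1-(1-q)^3)^K * (1-(1-q)^3)) by (simpl; ring).
    rewrite Rmult_comm. apply Rmult_le_compat_l; [apply pow_le; auto | apply surv3].
Qed.

Lemma surv_le : forall K n h, (3 * K <= n)%nat -> surv n q d h <= (1 - (1 - q) ^ 3) ^ K.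
Proof.
  intros K n h Hn.
  assert (Hr : 0 <= 1 - (1 - q) ^ 3).
  { assert ((1-q)^3 <= 1). rewrite <- (pow1 3). apply pow_incr; lra. lra. }
  replace n with ((n - 3 * K) + 3 * K)%nat by lia.
  eapply Rle_trans. apply (surv_markov (3*K) ((1-(1-q)^3)^K)). apply pow_le; auto. apply surv_geo.
  pose proof (surv_bnd (n - 3 * K) h). pose proof (pow_le _ K Hr). nra.
Qed.

Lemma PY_bounds : forall n (h : R),
  absY n q d h <= real (Lim_seq (fun m => absY m q d h)) <= absY n q d h + surv n q d h.
Proof.
  intros n h.
  assert (Hex : ex_finite_lim_seq (fun m => absY m q d h)).
  { apply ex_finite_lim_seq_incr with 1. intros; apply absY_mono1.
    intros; apply absY_bnd. }
  apply ex_finite_lim_seq_correct in Hex. destruct Hex as [_ Hfin].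
  rewrite <- (Lim_seq_incr_n _ n).
  rewrite <- (Lim_seq_incr_n _ n) in Hfin.
  split.
  - pose proof (Lim_seq_le_loc (fun _ => absY n q d h) (fun m => absY (m + n) q d h)) as HL.
    rewrite Lim_seq_const in HL.
    destruct (Lim_seq (fun m => absY (m + n) q d h)) eqn:E; unfold is_finite in Hfin; simpl in *; try discriminate; clear E.
    apply HL. exists O. intros; apply absY_mono.
  - pose proof (Lim_seq_le_loc (fun m => absY (m + n) q d h) (fun _ => absY n q d h + surv n q d h)) as HL.
    rewrite Lim_seq_const in HL.
    destruct (Lim_seq (fun m => absY (m + n) q d h)) eqn:E; unfold is_finite in Hfin; simpl in *; try discriminate; clear E.
    apply HL. exists O. intros. rewrite Nat.add_comm. apply absY_tail.
Qed.

End Walk.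

Lemma lattice_cases (r : nat) (u : R) : (1 <= r)%nat -> INR r * u = 1 -> 0 < u ->
  forall z : Z,
  ((Z.of_nat r + 1 <= z)%Z /\ 1 + u <= IZR z * u) \/
  (z = Z.of_nat r /\ IZR z * u = 1) \/
  ((- Z.of_nat r + 1 <= z <= Z.of_nat r - 1)%Z /\ -1 + u <= IZR z * u <= 1 - u) \/
  (z = (- Z.of_nat r)%Z /\ IZR z * u = -1) \/
  ((z <= - Z.of_nat r - 1)%Z /\ IZR z * u <= -1 - u).
Proof.
  intros Hr Hru Hu z.
  assert (HR : IZR (Z.of_nat r) = INR r) by (symmetry; apply INR_IZR_INZ).
  destruct (Z_le_gt_dec (Z.of_nat r + 1) z) as [H1|H1].
  { left. split; auto. apply IZR_le in H1. rewrite plus_IZR, HR in H1. nra. }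
  destruct (Z.eq_dec z (Z.of_nat r)) as [H2|H2].
  { right; left. split; auto. subst z. rewrite HR. lra. }
  destruct (Z_le_gt_dec (- Z.of_nat r + 1) z) as [H3|H3].
  { right; right; left. assert (H4 : (z <= Z.of_nat r - 1)%Z) by lia. split; [lia|].
    apply IZR_le in H3. apply IZR_le in H4. rewrite plus_IZR, opp_IZR, HR in H3.
    rewrite minus_IZR, HR in H4. split; nra. }
  destruct (Z.eq_dec z (- Z.of_nat r)) as [H5|H5].
  { right; right; right; left. split; auto. subst z. rewrite opp_IZR, HR. lra. }
  right; right; right; right. assert (H6 : (z <= - Z.of_nat r - 1)%Z) by lia. split; auto.
  apply IZR_le in H6. rewrite minus_IZR, opp_IZR, HR in H6. nra.
Qed.

Lemma transfer (q u dl c : R) (r : nat) (Inv : Z -> nat -> Prop) (N : nat) :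
  INR r * u = 1 ->
  (forall z k, Inv z k -> Inv (z + 1)%Z (S k)) ->
  (forall z k, Inv z k -> Inv (z - Z.of_nat r)%Z k) ->
  (forall z k, Inv z k -> (k <= N)%nat ->
     ((1 < IZR z * u + INR k * dl) <-> (1 < IZR z * u + c)) /\
     ((IZR z * u + INR k * dl < -1) <-> (IZR z * u + c < -1))) ->
  forall n z k, Inv z k -> (k + n <= N)%nat ->
  absY n q (u + dl) (IZR z * u + INR k * dl) = absY n q u (IZR z * u + c).
Proof.
  intros Hru Hup Hdn Hag. induction n; intros z k Hi Hk.
  - destruct (Hag z k Hi ltac:(lia)) as [[A1 A2] _]. simpl.
    destruct (Rlt_dec 1 (IZR z * u + INR k * dl)); destruct (Rlt_dec 1 (IZR z * u + c)); tauto.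
  - destruct (Hag z k Hi ltac:(lia)) as [[A1 A2] [B1 B2]]. simpl.
    destruct (Rlt_dec 1 (IZR z * u + INR k * dl)); destruct (Rlt_dec 1 (IZR z * u + c)); try tauto.
    destruct (Rlt_dec (IZR z * u + INR k * dl) (-1)); destruct (Rlt_dec (IZR z * u + c) (-1)); try tauto.
    assert (HR : IZR (Z.of_nat r) = INR r) by (symmetry; apply INR_IZR_INZ).
    replace (IZR z * u + INR k * dl + (u + dl)) with (IZR (z + 1) * u + INR (S k) * dl)
      by (rewrite plus_IZR, S_INR; ring).
    replace (IZR z * u + c + u) with (IZR (z + 1) * u + c) by (rewrite plus_IZR; ring).
    replace (IZR z * u + INR k * dl - 1) with (IZR (z - Z.of_nat r) * u + INR k * dl)
      by (rewrite minus_IZR, HR; rewrite <- Hru; ring).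
    replace (IZR z * u + c - 1) with (IZR (z - Z.of_nat r) * u + c)
      by (rewrite minus_IZR, HR; rewrite <- Hru; ring).
    rewrite IHn by (auto; lia). rewrite (IHn (z - Z.of_nat r)%Z k) by (auto; lia). reflexivity.
Qed.

Lemma harmonic_cmp (q u c M : R) (r : nat) (F : Z -> R) :
  0 <= q <= 1 -> INR r * u = 1 ->
  (forall j, 1 < IZR j * u + c -> F j = 1) ->
  (forall j, IZR j * u + c < -1 -> F j = 0) ->
  (forall j, ~ 1 < IZR j * u + c -> ~ IZR j * u + c < -1 ->
     Rabs (F j) <= M /\ F j = q * F (j + 1)%Z + (1 - q) * F (j - Z.of_nat r)%Z) ->
  forall n j, Rabs (F j - absY n q u (IZR j * u + c)) <= M * surv n q u (IZR j * u + c).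
Proof.
  intros Hq Hru HY HN HI.
  assert (HR : IZR (Z.of_nat r) = INR r) by (symmetry; apply INR_IZR_INZ).
  induction n; intros j; simpl.
  - destruct (Rlt_dec 1 (IZR j * u + c)).
    + rewrite HY by auto. rewrite Rminus_diag, Rabs_R0. lra.
    + destruct (Rlt_dec (IZR j * u + c) (-1)).
      * rewrite HN by auto. rewrite Rminus_0_r, Rabs_R0. lra.
      * destruct (HI j) as [H1 _]; auto. rewrite Rminus_0_r. lra.
  - destruct (Rlt_dec 1 (IZR j * u + c)).
    + rewrite HY by auto. rewrite Rminus_diag, Rabs_R0. lra.
    + destruct (Rlt_dec (IZR j * u + c) (-1)).
      * rewrite HN by auto. rewrite Rminus_0_r, Rabs_R0. lra.
      * destruct (HI j) as [_ H2]; auto.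
        replace (IZR j * u + c + u) with (IZR (j + 1) * u + c) by (rewrite plus_IZR; ring).
        replace (IZR j * u + c - 1) with (IZR (j - Z.of_nat r) * u + c)
          by (rewrite minus_IZR, HR; rewrite <- Hru; ring).
        pose proof (IHn (j + 1)%Z) as I1. pose proof (IHn (j - Z.of_nat r)%Z) as I2.
        rewrite H2.
        set (a1 := absY n q u (IZR (j + 1) * u + c)) in *.
        set (a2 := absY n q u (IZR (j - Z.of_nat r) * u + c)) in *.
        replace (q * F (j + 1)%Z + (1 - q) * F (j - Z.of_nat r)%Z - (q * a1 + (1 - q) * a2))
          with (q * (F (j + 1)%Z - a1) + (1 - q) * (F (j - Z.of_nat r)%Z - a2)) by ring.
        eapply Rle_trans. apply Rabs_triang.
        rewrite !Rabs_mult, (Rabs_right q), (Rabs_right (1 - q)) by lra.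
        nra.
Qed.

Definition Dq (q : R) (r : nat) := 1 - INR r * (1 - q) * q ^ r.
Definition F0 (q : R) (r : nat) := q ^ r / Dq q r.

Definition Flat (q : R) (r : nat) (j : Z) : R :=
  if Z_le_dec (Z.of_nat r) j then 1
  else if Z_le_dec 0 j then
    q ^ (Z.to_nat (Z.of_nat r - j)) * (1 + INR (Z.to_nat (Z.of_nat r - j)) * (1 - q) * F0 q r)
  else if Z_le_dec (- Z.of_nat r) j then q ^ (Z.to_nat (- j)) * F0 q r
  else 0.

Lemma pow_bern (q : R) : 0 <= q <= 1 -> forall n, q ^ n * (1 + INR n * (1 - q)) <= 1.
Proof.
  intros Hq; induction n.
  - simpl; lra.
  - rewrite S_INR. simpl pow.
    assert (0 <= q ^ n <= 1). { split. apply pow_le; lra. rewrite <- (pow1 n). apply pow_incr; lra. }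
    assert (0 <= q * (1 - q ^ n * (1 + INR n * (1 - q)))) by (apply Rmult_le_pos; lra).
    assert (0 <= (1 - q) * (1 - q * q ^ n)) by (apply Rmult_le_pos; nra).
    nra.
Qed.

Lemma Dq_pos (q : R) (r : nat) : 0 < q <= 1 -> q ^ r <= Dq q r /\ 0 < Dq q r.
Proof.
  intros Hq. pose proof (pow_bern q ltac:(lra) r). pose proof (pow_lt q r ltac:(lra)).
  unfold Dq. nra.
Qed.

Lemma F0_bnd (q : R) (r : nat) : 0 < q <= 1 -> 0 <= F0 q r <= 1.
Proof.
  intros Hq. destruct (Dq_pos q r Hq). pose proof (pow_lt q r ltac:(lra)). unfold F0.
  split. apply Rlt_le, Rdiv_lt_0_compat; lra.
  apply (Rmult_le_reg_r (Dq q r)); auto. unfold Rdiv. rewrite Rmult_assoc, Rinv_l by lra. lra.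
Qed.

Lemma F0_id (q : R) (r : nat) : 0 < q <= 1 ->
  F0 q r = q ^ r * (1 + INR r * (1 - q) * F0 q r).
Proof.
  intros Hq. destruct (Dq_pos q r Hq). unfold F0. unfold Dq in *. field. lra.
Qed.

Lemma Flat_pos (q : R) (r : nat) (i : nat) : (1 <= r)%nat -> 0 < q <= 1 -> (i <= r)%nat ->
  Flat q r (Z.of_nat r - Z.of_nat i) = q ^ i * (1 + INR i * (1 - q) * F0 q r).
Proof.
  intros Hr Hq Hi. unfold Flat.
  destruct (Z_le_dec (Z.of_nat r) (Z.of_nat r - Z.of_nat i)).
  - assert (i = 0%nat) by lia. subst. simpl. ring.
  - destruct (Z_le_dec 0 (Z.of_nat r - Z.of_nat i)); [|lia].
    replace (Z.to_nat (Z.of_nat r - (Z.of_nat r - Z.of_nat i))) with i by lia. reflexivity.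
Qed.

Lemma Flat_neg (q : R) (r : nat) (i : nat) : (1 <= r)%nat -> 0 < q <= 1 -> (i <= r)%nat ->
  Flat q r (- Z.of_nat i) = q ^ i * F0 q r.
Proof.
  intros Hr Hq Hi. unfold Flat.
  destruct (Z_le_dec (Z.of_nat r) (- Z.of_nat i)); [lia|].
  destruct (Z_le_dec 0 (- Z.of_nat i)).
  - assert (i = 0%nat) by lia. subst. simpl.
    replace (Z.to_nat (Z.of_nat r - 0)) with r by lia. rewrite <- F0_id by auto. ring.
  - destruct (Z_le_dec (- Z.of_nat r) (- Z.of_nat i)); [|lia].
    replace (Z.to_nat (- - Z.of_nat i)) with i by lia. reflexivity.
Qed.

Lemma Flat_high (q : R) (r : nat) j : (Z.of_nat r <= j)%Z -> Flat q r j = 1.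
Proof. intros; unfold Flat. destruct (Z_le_dec (Z.of_nat r) j); [reflexivity|lia]. Qed.

Lemma Flat_low (q : R) (r : nat) j : (j <= - Z.of_nat r - 1)%Z -> Flat q r j = 0.
Proof.
  intros; unfold Flat. destruct (Z_le_dec (Z.of_nat r) j); [lia|].
  destruct (Z_le_dec 0 j); [lia|]. destruct (Z_le_dec (- Z.of_nat r) j); [lia|]. reflexivity.
Qed.

Lemma Flat_bnd (q : R) (r : nat) j : 0 < q <= 1 -> Rabs (Flat q r j) <= 1 + INR r.
Proof.
  intros Hq. pose proof (F0_bnd q r Hq). pose proof (pos_INR r).
  unfold Flat.
  destruct (Z_le_dec (Z.of_nat r) j). { rewrite Rabs_R1; lra. }
  destruct (Z_le_dec 0 j).
  - set (m := Z.to_nat (Z.of_nat r - j)).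
    assert (Hm : INR m <= INR r) by (apply le_INR; unfold m; lia).
    pose proof (pos_INR m).
    assert (0 <= q ^ m <= 1). { split. apply pow_le; lra. rewrite <- (pow1 m). apply pow_incr; lra. }
    assert (0 <= INR m * (1 - q) * F0 q r <= INR r).
    { split. apply Rmult_le_pos; [apply Rmult_le_pos|]; lra.
      assert (INR m * (1 - q) <= INR m) by nra. nra. }
    rewrite Rabs_right by nra. nra.
  - destruct (Z_le_dec (- Z.of_nat r) j).
    + set (m := Z.to_nat (- j)).
      assert (0 <= q ^ m <= 1). { split. apply pow_le; lra. rewrite <- (pow1 m). apply pow_incr; lra. }
      rewrite Rabs_right by nra. nra.
    + rewrite Rabs_R0. lra.
Qed.

Lemma Flat_harm (q : R) (r : nat) j : (1 <= r)%nat -> 0 < q <= 1 ->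
  (- Z.of_nat r <= j <= Z.of_nat r - 1)%Z ->
  Flat q r j = q * Flat q r (j + 1) + (1 - q) * Flat q r (j - Z.of_nat r).
Proof.
  intros Hr Hq Hj.
  destruct (Z_le_dec 0 j).
  - set (i := Z.to_nat (Z.of_nat r - j)).
    assert (Hi1 : (1 <= i <= r)%nat) by (unfold i; lia).
    destruct i as [|i'] eqn:Ei; [lia|].
    replace j with (Z.of_nat r - Z.of_nat (S i'))%Z by lia.
    replace (Z.of_nat r - Z.of_nat (S i') + 1)%Z with (Z.of_nat r - Z.of_nat i')%Z by lia.
    replace (Z.of_nat r - Z.of_nat (S i') - Z.of_nat r)%Z with (- Z.of_nat (S i'))%Z by lia.
    rewrite (Flat_pos q r (S i')), (Flat_pos q r i'), (Flat_neg q r (S i')) by (auto; lia).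
    rewrite S_INR. simpl pow. ring.
  - set (i := Z.to_nat (- j)).
    assert (Hi1 : (1 <= i <= r)%nat) by (unfold i; lia).
    destruct i as [|i'] eqn:Ei; [lia|].
    replace j with (- Z.of_nat (S i'))%Z by lia.
    replace (- Z.of_nat (S i') + 1)%Z with (- Z.of_nat i')%Z by lia.
    rewrite (Flat_low q r (- Z.of_nat (S i') - Z.of_nat r)) by lia.
    rewrite (Flat_neg q r (S i')), (Flat_neg q r i') by (auto; lia). simpl pow. ring.
Qed.

Lemma lat_cmp (q : R) (r : nat) : (1 <= r)%nat -> 0 < q <= 1 ->
  forall n j, Rabs (Flat q r j - absY n q (/ INR r) (IZR j * / INR r + / INR r / 2))
    <= (1 + INR r) * surv n q (/ INR r) (IZR j * / INR r + / INR r / 2).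
Proof.
  intros Hr Hq.
  assert (HR : 0 < INR r) by (apply lt_0_INR; lia).
  assert (Hru : INR r * / INR r = 1) by (field; lra).
  assert (Hu : 0 < / INR r) by (apply Rinv_0_lt_compat; lra).
  assert (Hu1 : / INR r <= 1).
  { assert (1 <= INR r) by (apply (le_INR 1); lia). rewrite <- Rinv_1. apply Rinv_le_contravar; lra. }
  apply (harmonic_cmp q (/ INR r) (/ INR r / 2) (1 + INR r) r); [lra| auto | | | ].
  - intros j H. apply Flat_high.
    destruct (lattice_cases r (/ INR r) Hr Hru Hu j) as [[A B]|[[A B]|[[A B]|[[A B]|[A B]]]]]; (exfalso; lra) || lia.
  - intros j H. apply Flat_low.
    destruct (lattice_cases r (/ INR r) Hr Hru Hu j) as [[A B]|[[A B]|[[A B]|[[A B]|[A B]]]]]; (exfalso; lra) || lia.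
  - intros j H1 H2. split. apply Flat_bnd; auto. apply Flat_harm; auto.
    destruct (lattice_cases r (/ INR r) Hr Hru Hu j) as [[A B]|[[A B]|[[A B]|[[A B]|[A B]]]]];
      (exfalso; lra) || lia.
Qed.

Lemma absY_S_int n q d h : ~ 1 < h -> ~ h < -1 ->
  absY (S n) q d h = q * absY n q d (h + d) + (1 - q) * absY n q d (h - 1).
Proof.
  intros H1 H2. simpl. destruct (Rlt_dec 1 h); [tauto|]. destruct (Rlt_dec h (-1)); [tauto|]. reflexivity.
Qed.

Lemma Flat_0 q r : (1 <= r)%nat -> 0 < q <= 1 -> Flat q r 0 = F0 q r.
Proof. intros. pose proof (Flat_neg q r 0 H H0 ltac:(lia)) as E. simpl in E. rewrite E. ring. Qed.

Lemma core_left (q dl : R) (r K : nat) : (1 <= r)%nat -> 0 < q <= 1 -> 0 < dl ->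
  INR (3 * K + 2) * dl < / INR r / 2 ->
  Rabs (real (Lim_seq (fun n => absY n q (/ INR r + dl) 0)) - F0 q r)
    <= (2 + INR r) * (1 - (1 - q) ^ 3) ^ K.
Proof.
  intros Hr Hq Hd HN.
  set (u := / INR r) in *.
  assert (HR : 0 < INR r) by (apply lt_0_INR; lia).
  assert (Hru : INR r * u = 1) by (unfold u; field; lra).
  assert (Hu : 0 < u) by (apply Rinv_0_lt_compat; lra).
  assert (Hu1 : u <= 1).
  { assert (1 <= INR r) by (apply (le_INR 1); lia). unfold u. rewrite <- Rinv_1. apply Rinv_le_contravar; lra. }
  assert (Hq' : 0 <= q <= 1) by lra.
  set (n := (3 * K)%nat).
  destruct (PY_bounds q (u + dl) Hq' n 0) as [L1 L2].
  pose proof (surv_le q (u + dl) Hq' K n 0 ltac:(unfold n; lia)) as S1.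
  assert (E : absY n q (u + dl) 0 = absY n q u (IZR 0 * u + u / 2)).
  { replace 0 with (IZR 0 * u + INR 0 * dl) at 1 by (simpl; ring).
    apply (transfer q u dl (u / 2) r (fun z k => (z <= Z.of_nat k)%Z) (3 * K + 2));
      [exact Hru | intros; lia | intros; lia | | simpl; lia | unfold n; lia].
    intros z k Hi Hk.
      assert (Hk1 : 0 <= INR k * dl).
      { apply Rmult_le_pos; [apply pos_INR| lra]. }
      assert (Hk2 : INR k * dl < u / 2).
      { eapply Rle_lt_trans; [|exact HN]. apply Rmult_le_compat_r; [lra|]. apply le_INR; auto. }
      destruct (lattice_cases r u Hr Hru Hu z) as [[A B]|[[A B]|[[A B]|[[A B]|[A B]]]]].
      + split; split; intros; lra.
      + assert (Hk3 : 1 <= INR k) by (apply (le_INR 1); lia).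
        assert (dl <= INR k * dl) by nra.
        split; split; intros; lra.
      + split; split; intros; lra.
      + split; split; intros; lra.
      + split; split; intros; lra. }
  pose proof (lat_cmp q r Hr Hq n 0) as C. fold u in C.
  rewrite Flat_0 in C by auto.
  pose proof (surv_le q u Hq' K n (IZR 0 * u + u / 2) ltac:(unfold n; lia)) as S2.
  pose proof (pos_INR r).
  assert (0 <= (1 - (1 - q) ^ 3) ^ K).
  { apply pow_le. assert ((1-q)^3 <= 1). rewrite <- (pow1 3). apply pow_incr; lra. lra. }
  rewrite E in L1, L2.
  set (L := real _) in *.
  set (a := absY n q u (IZR 0 * u + u / 2)) in *.
  apply Rabs_le_between in C. apply Rabs_le_between.
  split; nra.
Qed.

Lemma core_right (q dl : R) (r K : nat) : (1 <= r)%nat -> 0 < q <= 1 -> dl < 0 ->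
  INR (3 * K + 2) * (- dl) < / INR r / 2 ->
  Rabs (real (Lim_seq (fun n => absY n q (/ INR r + dl) 0))
        - (q * F0 q r + (1 - q) * q * (q ^ r * F0 q r)))
    <= (2 + INR r) * (1 - (1 - q) ^ 3) ^ K.
Proof.
  intros Hr Hq Hd HN.
  set (u := / INR r) in *.
  assert (HR : 0 < INR r) by (apply lt_0_INR; lia).
  assert (Hru : INR r * u = 1) by (unfold u; field; lra).
  assert (Hu : 0 < u) by (apply Rinv_0_lt_compat; lra).
  assert (Hu1 : u <= 1).
  { assert (1 <= INR r) by (apply (le_INR 1); lia). unfold u. rewrite <- Rinv_1. apply Rinv_le_contravar; lra. }
  assert (Hq' : 0 <= q <= 1) by lra.
  set (n := (3 * K)%nat).
  destruct (PY_bounds q (u + dl) Hq' (S (S n)) 0) as [L1 L2].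
  pose proof (surv_le q (u + dl) Hq' K (S (S n)) 0 ltac:(unfold n; lia)) as S1.
  assert (HNd : INR (3 * K + 2) * dl > - (u / 2)) by lra.
  assert (Ag : forall z k, (1 <= k)%nat -> (k <= 3 * K + 2)%nat ->
     ((1 < IZR z * u + INR k * dl) <-> (1 < IZR z * u + - (u / 2))) /\
     ((IZR z * u + INR k * dl < -1) <-> (IZR z * u + - (u / 2) < -1))).
  { intros z k Hi Hk.
    assert (Hk3 : 1 <= INR k) by (apply (le_INR 1); lia).
    assert (Hk1 : INR k * dl <= dl) by nra.
    assert (Hk2 : INR k * dl >= - (u / 2)).
    { assert (INR k <= INR (3 * K + 2)) by (apply le_INR; auto). nra. }
    destruct (lattice_cases r u Hr Hru Hu z) as [[A B]|[[A B]|[[A B]|[[A B]|[A B]]]]];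
      split; split; intros; lra. }
  assert (E1 : absY (S n) q (u + dl) (0 + (u + dl)) = absY (S n) q u (IZR 0 * u + u / 2)).
  { replace (0 + (u + dl)) with (IZR 1 * u + INR 1 * dl) by (simpl; ring).
    replace (IZR 0 * u + u / 2) with (IZR 1 * u + - (u / 2)) by (simpl; field).
    apply (transfer q u dl (- (u / 2)) r (fun z k => (1 <= k)%nat) (3 * K + 2));
      [exact Hru | intros; lia | intros; lia | exact Ag | lia | unfold n; lia]. }
  assert (E2 : absY n q (u + dl) (0 - 1 + (u + dl)) = absY n q u (IZR (- Z.of_nat r) * u + u / 2)).
  { assert (HZ : IZR (Z.of_nat r) = INR r) by (symmetry; apply INR_IZR_INZ).
    replace (0 - 1 + (u + dl)) with (IZR (1 - Z.of_nat r) * u + INR 1 * dl)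
      by (rewrite minus_IZR, HZ; change (IZR 1) with 1; change (INR 1) with 1; lra).
    replace (IZR (- Z.of_nat r) * u + u / 2) with (IZR (1 - Z.of_nat r) * u + - (u / 2))
      by (rewrite minus_IZR, opp_IZR, HZ; change (IZR 1) with 1; lra).
    apply (transfer q u dl (- (u / 2)) r (fun z k => (1 <= k)%nat) (3 * K + 2));
      [exact Hru | intros; lia | intros; lia | exact Ag | lia | unfold n; lia]. }
  assert (E : absY (S (S n)) q (u + dl) 0 =
     q * absY (S n) q (u + dl) (0 + (u + dl)) + (1 - q) * (q * absY n q (u + dl) (0 - 1 + (u + dl)))).
  { rewrite absY_S_int by lra. rewrite (absY_S_int n q (u + dl) (0 - 1)) by lra.
    rewrite (absY_below q (u + dl) n (0 - 1 - 1)) by lra. ring. }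
  rewrite E1, E2 in E.
  pose proof (lat_cmp q r Hr Hq (S n) 0) as C1. fold u in C1.
  rewrite Flat_0 in C1 by auto.
  pose proof (lat_cmp q r Hr Hq n (- Z.of_nat r)) as C2. fold u in C2.
  rewrite Flat_neg in C2 by (auto; lia).
  pose proof (surv_le q u Hq' K (S n) (IZR 0 * u + u / 2) ltac:(unfold n; lia)) as S2.
  pose proof (surv_le q u Hq' K n (IZR (- Z.of_nat r) * u + u / 2) ltac:(unfold n; lia)) as S3.
  pose proof (pos_INR r).
  assert (0 <= (1 - (1 - q) ^ 3) ^ K).
  { apply pow_le. assert ((1-q)^3 <= 1). rewrite <- (pow1 3). apply pow_incr; lra. lra. }
  rewrite E in L1, L2.
  set (L := real _) in *.
  set (a := absY (S n) q u (IZR 0 * u + u / 2)) in *.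
  set (b := absY n q u (IZR (- Z.of_nat r) * u + u / 2)) in *.
  set (s1 := surv (S n) q u (IZR 0 * u + u / 2)) in *.
  set (s2 := surv n q u (IZR (- Z.of_nat r) * u + u / 2)) in *.
  set (rho := (1 - (1 - q) ^ 3) ^ K) in *.
  set (F := F0 q r) in *.
  apply Rabs_le_between in C1. apply Rabs_le_between in C2. apply Rabs_le_between.
  assert (Hs : s1 <= rho /\ s2 <= rho) by lra.
  assert (T1 : Rabs (a - F) <= (1 + INR r) * rho).
  { apply Rabs_le_between. nra. }
  assert (T2 : Rabs (b - q ^ r * F) <= (1 + INR r) * rho).
  { apply Rabs_le_between. nra. }
  assert (P1 : Rabs (q * (a - F)) <= q * ((1 + INR r) * rho)).
  { rewrite Rabs_mult, Rabs_right by lra. apply Rmult_le_compat_l; lra. }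
  assert (P2 : Rabs ((1 - q) * q * (b - q ^ r * F)) <= (1 - q) * q * ((1 + INR r) * rho)).
  { rewrite Rabs_mult, Rabs_right by nra. apply Rmult_le_compat_l; nra. }
  assert (P3 : q * ((1 + INR r) * rho) + (1 - q) * q * ((1 + INR r) * rho) <= (1 + INR r) * rho).
  { assert (0 <= (1 + INR r) * rho) by nra.
    assert (q + (1 - q) * q <= 1) by nra. nra. }
  apply Rabs_le_between in P1. apply Rabs_le_between in P2.
  assert (L - (q * F + (1 - q) * q * (q ^ r * F)) =
          (L - (q * a + (1 - q) * (q * b))) + q * (a - F) + (1 - q) * q * (b - q ^ r * F)) by ring.
  split; lra.
Qed.

Lemma ball_abs (x y eps : R) : ball x eps y <-> Rabs (y - x) < eps.
Proof.
  unfold ball; simpl; unfold AbsRing_ball; unfold abs, minus, plus, opp; simpl. tauto.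
Qed.

Lemma cont_near (f : R -> R) (x eps : R) : continuous f x -> 0 < eps ->
  locally x (fun y => Rabs (f y - f x) < eps).
Proof.
  intros Hc He. destruct (filterlim_locally (F := locally x) f (f x)) as [H _].
  specialize (H Hc (mkposreal eps He)). revert H. apply filter_imp.
  intros y Hy. apply ball_abs in Hy. exact Hy.
Qed.

Lemma alpha_gt1 p : 1/2 < p < 1 -> 1 < alpha p.
Proof.
  intros Hp. unfold alpha.
  assert (p / (1 - p) - 1 = (2 * p - 1) / (1 - p)) by (field; lra).
  assert (0 < (2 * p - 1) / (1 - p)) by (apply Rdiv_lt_0_compat; lra). lra.
Qed.

Definition ratio p e := par_a p e / (1 - par_b p e).

Lemma ratio_decr p e1 e2 : 1/2 < p < 1 -> 0 < e1 < 1 -> 0 < e2 < 1 -> e1 < e2 ->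
  ratio p e2 < ratio p e1.
Proof.
  intros Hp H1 H2 H12. unfold ratio, par_a, par_b.
  assert (0 < 1 - p * (1 - e1)) by nra. assert (0 < 1 - p * (1 - e2)) by nra.
  assert (E : (p + (1 - p) * e1) / (1 - p * (1 - e1)) - (p + (1 - p) * e2) / (1 - p * (1 - e2))
     = ((2 * p - 1) * (e2 - e1)) / ((1 - p * (1 - e1)) * (1 - p * (1 - e2)))) by (field; lra).
  assert (0 < ((2 * p - 1) * (e2 - e1)) / ((1 - p * (1 - e1)) * (1 - p * (1 - e2)))).
  { apply Rdiv_lt_0_compat. nra. nra. }
  lra.
Qed.

Lemma ratio_pos p e : 1/2 < p < 1 -> 0 < e < 1 -> 0 < ratio p e.
Proof.
  intros. unfold ratio, par_a, par_b. apply Rdiv_lt_0_compat; nra.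
Qed.

Lemma epsr_facts p r : 1/2 < p < 1 -> (2 <= r)%nat ->
  0 < eps_r p r < 1 /\ eta p (eps_r p r) = / INR r.
Proof.
  intros Hp Hr.
  pose proof (alpha_gt1 p Hp) as Ha.
  set (a := alpha p) in *.
  assert (HR : 2 <= INR r) by (apply (le_INR 2); lia).
  set (t := Rpower a (1 / INR r)).
  assert (Ht1 : 1 < t).
  { assert (Rpower a 0 < Rpower a (1 / INR r)) by (apply Rpower_lt; auto; apply Rdiv_lt_0_compat; lra).
    rewrite Rpower_O in H by lra. exact H. }
  assert (Hta : t < a).
  { assert (1 / INR r < 1).
    { apply (Rmult_lt_reg_r (INR r)); [lra|]. unfold Rdiv. rewrite Rmult_1_l, Rinv_l by lra. lra. }
    assert (Rpower a (1 / INR r) < Rpower a 1) by (apply Rpower_lt; auto).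
    rewrite Rpower_1 in H0 by lra. exact H0. }
  assert (Heq : eps_r p r = (a - t) / (t * a - 1)).
  { unfold eps_r. fold a. rewrite Rpower_plus, Rpower_1 by lra. fold t. reflexivity. }
  assert (Hd : 0 < t * a - 1) by nra.
  assert (He0 : 0 < eps_r p r) by (rewrite Heq; apply Rdiv_lt_0_compat; lra).
  assert (He1 : eps_r p r < 1).
  { assert (1 - eps_r p r = ((t * a - 1) - (a - t)) / (t * a - 1)) by (rewrite Heq; field; lra).
    assert (0 < ((t * a - 1) - (a - t)) / (t * a - 1)) by (apply Rdiv_lt_0_compat; nra). lra. }
  split; [lra|].
  set (e := eps_r p r) in *.
  assert (Hpa : a * (1 - p) = p) by (unfold a, alpha; field; lra).
  assert (Hee : e * (t * a - 1) = a - t) by (rewrite Heq; field; lra).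
  assert (H3 : e * (t * (a * (1 - p)) - (1 - p)) = a * (1 - p) - t * (1 - p)).
  { transitivity ((1 - p) * (e * (t * a - 1))); [ring| rewrite Hee; ring]. }
  rewrite Hpa in H3.
  assert (Hrat : par_a p e / (1 - par_b p e) = t).
  { unfold par_a, par_b. assert (0 < 1 - p * (1 - e)) by nra.
    apply (Rmult_eq_reg_r (1 - p * (1 - e))); [|lra].
    unfold Rdiv. rewrite Rmult_assoc, Rinv_l by lra. nra. }
  unfold eta. rewrite Hrat. fold a. unfold t, Rpower. rewrite ln_exp.
  assert (0 < ln a) by (rewrite <- ln_1; apply ln_increasing; lra).
  field. split; lra.
Qed.

Lemma eta_side p r e : 1/2 < p < 1 -> (2 <= r)%nat -> 0 < e < 1 ->
  (e < eps_r p r -> / INR r < eta p e) /\ (eps_r p r < e -> eta p e < / INR r).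
Proof.
  intros Hp Hr He. destruct (epsr_facts p r Hp Hr) as [Hx Hη].
  rewrite <- Hη. pose proof (alpha_gt1 p Hp).
  assert (0 < ln (alpha p)) by (rewrite <- ln_1; apply ln_increasing; lra).
  unfold eta. fold (ratio p e). fold (ratio p (eps_r p r)).
  pose proof (ratio_pos p e Hp He). pose proof (ratio_pos p (eps_r p r) Hp Hx).
  split; intros Hlt.
  - pose proof (ratio_decr p e (eps_r p r) Hp He Hx Hlt).
    pose proof (ln_increasing _ _ H2 H3). unfold Rdiv. apply Rmult_lt_compat_r.
    apply Rinv_0_lt_compat; lra. lra.
  - pose proof (ratio_decr p (eps_r p r) e Hp Hx He Hlt).
    pose proof (ln_increasing _ _ H1 H3). unfold Rdiv. apply Rmult_lt_compat_r.
    apply Rinv_0_lt_compat; lra. lra.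
Qed.

Lemma pf_bnd p e V : 1/2 < p < 1 -> 0 < e < 1 -> 0 < pf p e V < 1.
Proof. intros. destruct V; unfold pf, par_a, par_b; split; nra. Qed.

Lemma cont_eta p e0 : 1/2 < p < 1 -> 0 < e0 < 1 -> continuous (fun e => eta p e) e0.
Proof.
  intros Hp He. apply (ex_derive_continuous (K:=R_AbsRing) (V:=R_NormedModule)).
  unfold eta, par_a, par_b. auto_derive. split; [nra|]. split; [|trivial].
  apply Rmult_lt_0_compat; [nra|]. apply Rinv_0_lt_compat; nra.
Qed.

Lemma cont_pf p V e0 : continuous (fun e => pf p e V) e0.
Proof.
  apply (ex_derive_continuous (K:=R_AbsRing) (V:=R_NormedModule)).
  destruct V; unfold pf, par_a, par_b; auto_derive; trivial.
Qed.

Lemma cont_F0 r q0 : 0 < q0 <= 1 -> continuous (fun q => F0 q r) q0.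
Proof.
  intros Hq. destruct (Dq_pos q0 r Hq). unfold Dq in *.
  apply (ex_derive_continuous (K:=R_AbsRing) (V:=R_NormedModule)).
  unfold F0, Dq. auto_derive. lra.
Qed.

Definition Lpf (q : R) (r : nat) := q * F0 q r + (1 - q) * q * (q ^ r * F0 q r).

Lemma cont_Lpf r q0 : 0 < q0 <= 1 -> continuous (fun q => Lpf q r) q0.
Proof.
  intros Hq. destruct (Dq_pos q0 r Hq). unfold Dq in *.
  apply (ex_derive_continuous (K:=R_AbsRing) (V:=R_NormedModule)).
  unfold Lpf, F0, Dq. auto_derive. repeat split; lra.
Qed.

Lemma rho_mono q q1 K : 0 < q <= q1 -> q1 < 1 ->
  0 <= (1 - (1 - q) ^ 3) ^ K <= (1 - (1 - q1) ^ 3) ^ K.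
Proof.
  intros Hq Hq1.
  assert ((1 - q) ^ 3 <= 1) by (rewrite <- (pow1 3); apply pow_incr; lra).
  assert ((1 - q1) ^ 3 <= (1 - q) ^ 3) by (apply pow_incr; lra).
  split. apply pow_le; lra. apply pow_incr; lra.
Qed.

Lemma choose_K q1 (c eps : R) : 0 < q1 < 1 -> 0 < c -> 0 < eps ->
  exists K : nat, c * (1 - (1 - q1) ^ 3) ^ K < eps.
Proof.
  intros Hq1 Hc He.
  assert (0 < (1 - q1) ^ 3) by (apply pow_lt; lra).
  assert ((1 - q1) ^ 3 <= 1) by (rewrite <- (pow1 3); apply pow_incr; lra).
  destruct (pow_lt_1_zero (1 - (1 - q1) ^ 3) ltac:(rewrite Rabs_right; lra) (eps / c)
     ltac:(apply Rdiv_lt_0_compat; lra)) as [K HK].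
  exists K. specialize (HK K (Nat.le_refl K)).
  rewrite Rabs_right in HK by (apply Rle_ge, pow_le; lra).
  apply (Rmult_lt_reg_l (/ c)). apply Rinv_0_lt_compat; lra.
  rewrite <- Rmult_assoc, Rinv_l by lra. unfold Rdiv in HK. lra.
Qed.

Lemma left_lim p V r : 1/2 < p < 1 -> (2 <= r)%nat ->
  filterlim (fun e => PYcas p e V) (at_left (eps_r p r)) (locally (F0 (pf p (eps_r p r) V) r)).
Proof.
  intros Hp Hr. destruct (epsr_facts p r Hp Hr) as [Hx Heta].
  set (x := eps_r p r) in *.
  set (q0 := pf p x V).
  pose proof (pf_bnd p x V Hp Hx) as Hq0. fold q0 in Hq0.
  assert (HR : 2 <= INR r) by (apply (le_INR 2); lia).
  set (u := / INR r) in *.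
  assert (Hu : 0 < u) by (apply Rinv_0_lt_compat; lra).
  apply filterlim_locally. intros eps.
  set (q1 := (1 + q0) / 2).
  destruct (choose_K q1 (2 + INR r) (eps / 2)) as [K HK]; [unfold q1; lra| lra| destruct eps; simpl; lra|].
  set (N := INR (3 * K + 2)).
  assert (HN : 0 < N) by (unfold N; apply lt_0_INR; lia).
  assert (C1 := cont_near (fun e => e) x (Rmin x (1 - x)) (continuous_id x)
          ltac:(apply Rmin_pos; lra)).
  assert (C2 := cont_near (fun e => pf p e V) x (Rmin q0 ((1 - q0) / 2)) (cont_pf p V x)
          ltac:(apply Rmin_pos; lra)).
  assert (C3 := cont_near (fun e => eta p e) x (u / 2 / N) (cont_eta p x Hp Hx)
          ltac:(apply Rdiv_lt_0_compat; lra)).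
  assert (C4 := cont_near (fun e => F0 (pf p e V) r) x (eps / 2)
          (continuous_comp (fun e => pf p e V) (fun q => F0 q r) x (cont_pf p V x)
             (cont_F0 r q0 ltac:(lra)))
          ltac:(destruct eps; simpl; lra)).
  unfold at_left, within.
  generalize (filter_and _ _ C1 (filter_and _ _ C2 (filter_and _ _ C3 C4))).
  apply filter_imp. intros e [A1 [A2 [A3 A4]]] Hlt. cbv beta in *.
  fold q0 in A2, A4. rewrite Heta in A3.
  apply ball_abs.
  pose proof (Rmin_l x (1 - x)). pose proof (Rmin_r x (1 - x)).
  pose proof (Rmin_l q0 ((1 - q0) / 2)). pose proof (Rmin_r q0 ((1 - q0) / 2)).
  apply Rabs_lt_between in A1. apply Rabs_lt_between in A2.
  assert (He : 0 < e < 1) by lra.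
  set (q := pf p e V) in *.
  assert (Hq : 0 < q <= q1) by (unfold q1; lra).
  destruct (eta_side p r e Hp Hr He) as [S1 _]. specialize (S1 Hlt). fold u in S1.
  set (dl := eta p e - u).
  assert (Hdl : 0 < dl) by (unfold dl; lra).
  assert (HNd : N * dl < u / 2).
  { apply Rabs_lt_between in A3.
    assert (dl < u / 2 / N) by (unfold dl; lra).
    apply (Rmult_lt_compat_l N) in H3; auto. unfold Rdiv in H3 |- *.
    replace (N * (u * / 2 * / N)) with (u * / 2) in H3 by (field; lra). lra. }
  pose proof (core_left q dl r K ltac:(lia) ltac:(unfold q1 in Hq; lra) Hdl HNd) as Core.
  unfold PYcas. fold q. replace (eta p e) with (/ INR r + dl) by (unfold dl, u; ring).
  destruct (rho_mono q q1 K Hq ltac:(unfold q1; lra)).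
  pose proof (pos_INR r).
  assert ((2 + INR r) * (1 - (1 - q) ^ 3) ^ K <= (2 + INR r) * (1 - (1 - q1) ^ 3) ^ K)
    by (apply Rmult_le_compat_l; lra).
  set (L := real _) in *.
  apply Rabs_lt_between in A4. apply Rabs_le_between in Core.
  apply Rabs_lt_between. lra.
Qed.

Lemma right_lim p V r : 1/2 < p < 1 -> (2 <= r)%nat ->
  filterlim (fun e => PYcas p e V) (at_right (eps_r p r)) (locally (Lpf (pf p (eps_r p r) V) r)).
Proof.
  intros Hp Hr. destruct (epsr_facts p r Hp Hr) as [Hx Heta].
  set (x := eps_r p r) in *.
  set (q0 := pf p x V).
  pose proof (pf_bnd p x V Hp Hx) as Hq0. fold q0 in Hq0.
  assert (HR : 2 <= INR r) by (apply (le_INR 2); lia).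
  set (u := / INR r) in *.
  assert (Hu : 0 < u) by (apply Rinv_0_lt_compat; lra).
  apply filterlim_locally. intros eps.
  set (q1 := (1 + q0) / 2).
  destruct (choose_K q1 (2 + INR r) (eps / 2)) as [K HK]; [unfold q1; lra| lra| destruct eps; simpl; lra|].
  set (N := INR (3 * K + 2)).
  assert (HN : 0 < N) by (unfold N; apply lt_0_INR; lia).
  assert (C1 := cont_near (fun e => e) x (Rmin x (1 - x)) (continuous_id x)
          ltac:(apply Rmin_pos; lra)).
  assert (C2 := cont_near (fun e => pf p e V) x (Rmin q0 ((1 - q0) / 2)) (cont_pf p V x)
          ltac:(apply Rmin_pos; lra)).
  assert (C3 := cont_near (fun e => eta p e) x (u / 2 / N) (cont_eta p x Hp Hx)
          ltac:(apply Rdiv_lt_0_compat; lra)).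
  assert (C4 := cont_near (fun e => Lpf (pf p e V) r) x (eps / 2)
          (continuous_comp (fun e => pf p e V) (fun q => Lpf q r) x (cont_pf p V x)
             (cont_Lpf r q0 ltac:(lra)))
          ltac:(destruct eps; simpl; lra)).
  unfold at_right, within.
  generalize (filter_and _ _ C1 (filter_and _ _ C2 (filter_and _ _ C3 C4))).
  apply filter_imp. intros e [A1 [A2 [A3 A4]]] Hlt. cbv beta in *.
  fold q0 in A2, A4. rewrite Heta in A3.
  apply ball_abs.
  pose proof (Rmin_l x (1 - x)). pose proof (Rmin_r x (1 - x)).
  pose proof (Rmin_l q0 ((1 - q0) / 2)). pose proof (Rmin_r q0 ((1 - q0) / 2)).
  apply Rabs_lt_between in A1. apply Rabs_lt_between in A2.
  assert (He : 0 < e < 1) by lra.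
  set (q := pf p e V) in *.
  assert (Hq : 0 < q <= q1) by (unfold q1; lra).
  destruct (eta_side p r e Hp Hr He) as [_ S1]. specialize (S1 Hlt). fold u in S1.
  set (dl := eta p e - u).
  assert (Hdl : dl < 0) by (unfold dl; lra).
  assert (HNd : N * - dl < u / 2).
  { apply Rabs_lt_between in A3.
    assert (- dl < u / 2 / N) by (unfold dl; lra).
    apply (Rmult_lt_compat_l N) in H3; auto. unfold Rdiv in H3 |- *.
    replace (N * (u * / 2 * / N)) with (u * / 2) in H3 by (field; lra). lra. }
  pose proof (core_right q dl r K ltac:(lia) ltac:(unfold q1 in Hq; lra) Hdl HNd) as Core.
  unfold PYcas. fold q. replace (eta p e) with (/ INR r + dl) by (unfold dl, u; ring).
  destruct (rho_mono q q1 K Hq ltac:(unfold q1; lra)).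
  pose proof (pos_INR r).
  assert ((2 + INR r) * (1 - (1 - q) ^ 3) ^ K <= (2 + INR r) * (1 - (1 - q1) ^ 3) ^ K)
    by (apply Rmult_le_compat_l; lra).
  set (L := real _) in *.
  unfold Lpf in A4 |- *.
  apply Rabs_lt_between in A4. apply Rabs_le_between in Core.
  apply Rabs_lt_between. lra.
Qed.

Theorem mainTheorem5 (p : R) (V : value) (r : nat) :
  1 / 2 < p < 1 -> (2 <= r)%nat ->
  let q := pf p (eps_r p r) V in
  let Lplus := q ^ (r + 1) * (1 + (1 - q) * q ^ r) / (1 - INR r * (1 - q) * q ^ r) in
  let Lminus := q ^ r / (1 - INR r * (1 - q) * q ^ r) in
  filterlim (fun e => PYcas p e V) (at_right (eps_r p r)) (locally Lplus) /\
  filterlim (fun e => PYcas p e V) (at_left (eps_r p r)) (locally Lminus) /\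
  Lplus < Lminus /\
  (Lminus - Lplus) / Lminus = (1 - q) * (1 - q ^ (r + 1)).
Proof.
  intros Hp Hr q Lplus Lminus.
  destruct (epsr_facts p r Hp Hr) as [Hx _].
  pose proof (pf_bnd p (eps_r p r) V Hp Hx) as Hq. fold q in Hq.
  destruct (Dq_pos q r ltac:(lra)) as [D1 D2]. unfold Dq in D1, D2.
  assert (Hqr : 0 < q ^ r) by (apply pow_lt; lra).
  assert (Hqr1 : q ^ r <= 1) by (rewrite <- (pow1 r); apply pow_incr; lra).
  assert (EM : Lminus = F0 q r) by reflexivity.
  assert (EP : Lplus = Lpf q r).
  { unfold Lplus, Lpf, F0, Dq. rewrite pow_add, pow_1. field. lra. }
  assert (HF : 0 < F0 q r) by (unfold F0; apply Rdiv_lt_0_compat; unfold Dq; lra).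
  split; [rewrite EP; apply right_lim; auto|].
  split; [rewrite EM; apply left_lim; auto|].
  rewrite EP, EM. unfold Lpf. split.
  - assert (q * q ^ r < 1) by nra.
    assert (q + (1 - q) * q * q ^ r < 1) by nra. nra.
  - rewrite pow_add, pow_1. field. lra.
Qed.
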